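(* Let $\mathbf A=(A,\land,\lor,{}',0,1)$ be a pseudo-Kleene lattice. Then $\mathbf A$ is super-paraorthomodular if and only if $\mathbf A$ is a pasting of its Kleene blocks, i.e. for all $x,y\in A$: $x\leq y$ if and only if there is a Kleene block $\mathbf K$ of $\mathbf A$ with $x,y\in K$ and $x\leq y$ in $\mathbf K$.
   Context: A pseudo-Kleene lattice is an algebra $(A,\land,\lor,{}',0,1)$ such that $(A,\land,\lor,0,1)$ is a bounded lattice, ${}'$ is an antitone involution ($x\leq y$ implies $y'\leq x'$, and $x''=x$), and $x\land x'\leq y\lor y'$ for all $x,y$. A pseudo-Kleene lattice is super-paraorthomodular (sp-orthomodular) if it satisfies, for all $x,y$: (SP1) if $x\leq y$ and $x'\land y=(x\land x')\lor(y\land y')$, then $y\land(x\lor x')=x\lor(y\land y')$; (SP2) if $x\leq y$, then $(x\land x')\lor(y\land y')=(x'\land y)\land(x'\land y)'$. A Kleene sub-lattice of a pseudo-Kleene lattice $\mathbf A$ is a subset containing $0,1$ and closed under $\land,\lor,{}'$ which is distributive as a lattice; a Kleene block is a maximal (under inclusion) Kleene sub-lattice. *)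

(* Defs.v *)
From mathcomp Require Import all_boot all_order.
Set Implicit Arguments. Unset Strict Implicit. Unset Printing Implicit Defensive.
Import Order.LTheory.
Local Open Scope order_scope.

Definition pseudo_kleene {d : Order.disp_t} {T : tbLatticeType d} (c : T -> T) : Prop :=
  [/\ (forall x y : T, x <= y -> c y <= c x),
      (forall x : T, c (c x) = x) &
      (forall x y : T, x `&` c x <= y `|` c y)].

Definition sp_orthomodular {d : Order.disp_t} {T : tbLatticeType d} (c : T -> T) : Prop :=
  (forall x y : T, x <= y ->
     c x `&` y = (x `&` c x) `|` (y `&` c y) ->
     y `&` (x `|` c x) = x `|` (y `&` c y)) /\
  (forall x y : T, x <= y ->
     (x `&` c x) `|` (y `&` c y) = (c x `&` y) `&` c (c x `&` y)).

Definition kleene_sublattice {d : Order.disp_t} {T : tbLatticeType d} (c : T -> T)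
    (K : T -> Prop) : Prop :=
  K \bot /\ K \top /\
  (forall x y, K x -> K y -> K (x `&` y)) /\
  (forall x y, K x -> K y -> K (x `|` y)) /\
  (forall x, K x -> K (c x)) /\
  (forall x y z, K x -> K y -> K z -> x `&` (y `|` z) = (x `&` y) `|` (x `&` z)).

Definition kleene_block {d : Order.disp_t} {T : tbLatticeType d} (c : T -> T)
    (K : T -> Prop) : Prop :=
  kleene_sublattice c K /\
  forall K' : T -> Prop, kleene_sublattice c K' -> (forall x, K x -> K' x) ->
    forall x, K' x -> K x.

(* A is a pasting of its Kleene blocks: x <= y iff x, y lie in a common Kleene
   block K and x <= y in K (the order of K is the restriction of that of A). *)
Definition pasting_of_kleene_blocks {d : Order.disp_t} {T : tbLatticeType d}
    (c : T -> T) : Prop :=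
  forall x y : T, x <= y <-> exists K : T -> Prop, [/\ kleene_block c K, K x, K y & x <= y].

(* Main.v *)
Require Import Defs.
From mathcomp Require Import all_boot all_order.
From mathcomp Require Import boolp classical_sets.
Import Order.LTheory.
Local Open Scope order_scope.

Lemma lU {d : Order.disp_t} {T : latticeType d} (x y z : T) : x <= z -> y <= z -> x `|` y <= z.
Proof. by move=> h1 h2; rewrite leUx h1 h2. Qed.
Lemma lI {d : Order.disp_t} {T : latticeType d} (x y z : T) : x <= y -> x <= z -> x <= y `&` z.
Proof. by move=> h1 h2; rewrite lexI h1 h2. Qed.
Lemma lIl {d : Order.disp_t} {T : latticeType d} (x y z : T) : x <= z -> x `&` y <= z.
Proof. by move=> h; apply: le_trans (leIl _ _) h. Qed.
Lemma lIr {d : Order.disp_t} {T : latticeType d} (x y z : T) : y <= z -> x `&` y <= z.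
Proof. by move=> h; apply: le_trans (leIr _ _) h. Qed.
Lemma lUl {d : Order.disp_t} {T : latticeType d} (x y z : T) : x <= y -> x <= y `|` z.
Proof. by move=> h; apply: le_trans h (leUl _ _). Qed.
Lemma lUr {d : Order.disp_t} {T : latticeType d} (x y z : T) : x <= z -> x <= y `|` z.
Proof. by move=> h; apply: le_trans h (leUr _ _). Qed.
Lemma lH {d : Order.disp_t} {T : latticeType d} (x y p q : T) : p <= q -> x <= p -> q <= y -> x <= y.
Proof. by move=> h h1 h2; apply: le_trans h1 (le_trans h h2). Qed.

Arguments lH {d T x y p q}.

Ltac lhyp n :=
  lazymatch n with
  | S ?m => match goal with H : is_true ((_ `&` _) <= _) |- _ =>
              apply: (lH H); [lsolve m | lsolve m] end
  end
with lsolve n :=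
  match goal with
  | |- is_true (?x <= ?x) => exact: lexx
  | |- is_true (\bot <= _) => exact: le0x
  | |- is_true (_ <= \top) => exact: lex1
  | |- is_true (_ `|` _ <= _) => apply: lU; lsolve n
  | |- is_true (_ <= _ `&` _) => apply: lI; lsolve n
  | |- is_true (_ `&` _ <= _ `|` _) => first [ apply: lIl; lsolve n | apply: lIr; lsolve n
              | apply: lUl; lsolve n | apply: lUr; lsolve n | lhyp n ]
  | |- is_true (_ `&` _ <= _) => first [ apply: lIl; lsolve n | apply: lIr; lsolve n | lhyp n ]
  | |- is_true (_ <= _ `|` _) => first [ apply: lUl; lsolve n | apply: lUr; lsolve n | lhyp n ]
  | _ => first [ assumption | lhyp n ]
  end.

Section S.
Variables (d : Order.disp_t) (T : tbLatticeType d) (c : T -> T).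
Hypothesis canti : forall x y : T, x <= y -> c y <= c x.
Hypothesis cc : forall x : T, c (c x) = x.

Lemma cle x y : (c x <= c y) = (y <= x).
Proof. apply/idP/idP => [/canti|/canti //]; by rewrite !cc. Qed.

Lemma cI x y : c (x `&` y) = c x `|` c y.
Proof.
apply: le_anti; rewrite leUx !canti ?leIl ?leIr // andbT /=.
by rewrite -(cc (c x `|` c y)) canti // lexI -(cle x) -(cle y) cc leUl leUr.
Qed.

Lemma cU x y : c (x `|` y) = c x `&` c y.
Proof. by rewrite -(cc (c x `&` c y)) cI !cc. Qed.

Lemma c0 : c \bot = \top.
Proof. by apply: le_anti; rewrite lex1 /= -(cc \top) canti // le0x. Qed.

Hypothesis sp1 : forall x y : T, x <= y ->
     c x `&` y = (x `&` c x) `|` (y `&` c y) ->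
     y `&` (x `|` c x) = x `|` (y `&` c y).
Hypothesis sp2 : forall x y : T, x <= y ->
     (x `&` c x) `|` (y `&` c y) = (c x `&` y) `&` c (c x `&` y).

Lemma M1 (x y : T) : x <= y -> y `&` (x `|` c x) <= x `|` (c x `&` y).
Proof.
move=> hxy.
have hyx : c y <= c x by apply: canti.
have S2 := sp2 _ _ hxy; rewrite cI !cc in S2.
have S2le : (c x `&` y) `&` (x `|` c y) <= (x `&` c x) `|` (y `&` c y) by rewrite S2.
set z := x `|` (c x `&` y).
set w := y `&` (x `|` c x).
have czE : c z = c x `&` (x `|` c y) by rewrite /z cU cI !cc.
have cwE : c w = c y `|` (c x `&` x) by rewrite /w cI cU cc.
have f1 : z <= w by rewrite /z /w; lsolve 0.
have f1c : c w <= c z by apply: canti.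
have f2 : c z `&` w = (x `&` c x) `|` (y `&` c y).
  apply: le_anti; apply/andP; split; rewrite czE /w; lsolve 1.
have f3 : c z `&` w = (z `&` c z) `|` (w `&` c w).
  apply: le_anti; apply/andP; split.
    rewrite f2 czE cwE /z /w; lsolve 0.
  lsolve 1.
have := sp1 _ _ f1 f3.
have f4 : w <= z `|` c z.
  rewrite -cle cU cc.
  have h1 : c z `&` z <= c z `&` w by lsolve 1.
  rewrite f2 in h1; apply: le_trans h1 _; rewrite cwE; lsolve 0.
have f5 : w `&` c w <= z.
  have h1 : w `&` c w <= c z `&` w by lsolve 1.
  rewrite f2 in h1; apply: le_trans h1 _; rewrite /z; lsolve 1.
rewrite (meet_l f4) (join_l f5) => ->; exact: lexx.
Qed.
Definition codes : seq (seq nat) := [:: [:: 0; 0; 0; 0; 0; 0]; [:: 0; 0; 0; 1; 0; 0]; [:: 0; 0; 0; 1; 1; 0]; [:: 0; 1; 0; 1; 0; 0]; [:: 0; 1; 0; 1; 1; 0]; [:: 0; 0; 0; 1; 1; 2]; [:: 2; 1; 0; 1; 0; 0]; [:: 0; 1; 0; 1; 1; 2]; [:: 0; 1; 2; 1; 1; 0]; [:: 2; 1; 0; 1; 1; 0]; [:: 0; 1; 2; 1; 1; 2]; [:: 2; 1; 0; 1; 1; 2]; [:: 2; 1; 2; 1; 1; 0]; [:: 0; 1; 2; 1; 2; 2]; [:: 2; 2; 2; 1; 1; 0]; [:: 2; 1; 2; 1; 1; 2]; [:: 2; 1; 2; 1; 2; 2]; [:: 2; 2; 2; 1; 1; 2];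 [:: 2; 2; 2; 1; 2; 2]; [:: 2; 2; 2; 2; 2; 2]].
Definition mtab : seq (seq nat) := [:: [:: 0; 0; 0; 0; 0; 0; 0; 0; 0; 0; 0; 0; 0; 0; 0; 0; 0; 0; 0; 0]; [:: 0; 1; 1; 1; 1; 1; 1; 1; 1; 1; 1; 1; 1; 1; 1; 1; 1; 1; 1; 1]; [:: 0; 1; 2; 1; 2; 2; 1; 2; 2; 2; 2; 2; 2; 2; 2; 2; 2; 2; 2; 2]; [:: 0; 1; 1; 3; 3; 1; 3; 3; 3; 3; 3; 3; 3; 3; 3; 3; 3; 3; 3; 3]; [:: 0; 1; 2; 3; 4; 2; 3; 4; 4; 4; 4; 4; 4; 4; 4; 4; 4; 4; 4; 4]; [:: 0; 1; 2; 1; 2; 5; 1; 5; 2; 2; 5; 5; 2; 5; 2; 5; 5; 5; 5; 5]; [:: 0; 1; 1; 3; 3; 1; 6; 3; 3; 6; 3; 6; 6; 3; 6; 6; 6; 6; 6; 6]; [:: 0; 1; 2; 3; 4; 5; 3; 7; 4; 4; 7; 7; 4; 7; 4; 7; 7; 7; 7; 7]; [:: 0; 1; 2; 3; 4; 2; 3; 4; 8; 4; 8; 4; 8; 8; 8; 8; 8; 8; 8; 8]; [:: 0; 1; 2; 3; 4; 2; 6; 4; 4; 9; 4; 9; 9; 4; 9; 9; 9; 9; 9; 9]; [:: 0; 1; 2; 3; 4; 5; 3; 7; 8; 4; 10; 7; 8; 10; 8; 10; 10; 10; 10; 10]; [:: 0; 1; 2; 3; 4; 5; 6; 7; 4; 9;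 7; 11; 9; 7; 9; 11; 11; 11; 11; 11]; [:: 0; 1; 2; 3; 4; 2; 6; 4; 8; 9; 8; 9; 12; 8; 12; 12; 12; 12; 12; 12]; [:: 0; 1; 2; 3; 4; 5; 3; 7; 8; 4; 10; 7; 8; 13; 8; 10; 13; 10; 13; 13]; [:: 0; 1; 2; 3; 4; 2; 6; 4; 8; 9; 8; 9; 12; 8; 14; 12; 12; 14; 14; 14]; [:: 0; 1; 2; 3; 4; 5; 6; 7; 8; 9; 10; 11; 12; 10; 12; 15; 15; 15; 15; 15]; [:: 0; 1; 2; 3; 4; 5; 6; 7; 8; 9; 10; 11; 12; 13; 12; 15; 16; 15; 16; 16]; [:: 0; 1; 2; 3; 4; 5; 6; 7; 8; 9; 10; 11; 12; 10; 14; 15; 15; 17; 17; 17]; [:: 0; 1; 2; 3; 4; 5; 6; 7; 8; 9; 10; 11; 12; 13; 14; 15; 16; 17; 18; 18]; [:: 0; 1; 2; 3; 4; 5; 6; 7; 8; 9; 10; 11; 12; 13; 14; 15; 16; 17; 18; 19]].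

Definition leF (i j : nat) := all2 leq (nth [::] codes i) (nth [::] codes j).
Definition mt (i j : nat) := nth 0 (nth [::] mtab i) j.
Definition jt (i j : nat) := 19 - mt (19 - i) (19 - j).

Lemma c1 : c \top = \bot.
Proof. by rewrite -c0 cc. Qed.

Variables (a b : T).
Hypothesis hab : a <= b.

Definition t (n : nat) : T :=
  match n with
  | 0 => \bot
  | 1 => a `&` c b
  | 2 => a `&` c a
  | 3 => b `&` c b
  | 4 => (a `&` c a) `|` (b `&` c b)
  | 5 => a
  | 6 => c b
  | 7 => a `|` (b `&` c b)
  | 8 => c a `&` b
  | 9 => c b `|` (a `&` c a)
  | 10 => b `&` (c a `|` a)
  | 11 => a `|` c b
  | 12 => c a `&` (c b `|` b)
  | 13 => b
  | 14 => c a
  | 15 => (c a `|` a) `&` (c b `|` b)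
  | 16 => c b `|` b
  | 17 => c a `|` a
  | 18 => c a `|` b
  | _ => \top
  end.

Lemma tc {i} : (i < 20)%N -> c (t i) = t (19 - i).
Proof.
do 20 (case: i => [|i]; first by move=> _; rewrite /= ?(cI, cU, cc, c0, c1)).
by [].
Qed.

Lemma hba : c b <= c a. Proof. exact: canti. Qed.

Lemma SP2h : (c a `&` b) `&` (a `|` c b) <= (a `&` c a) `|` (b `&` c b).
Proof. by rewrite (sp2 _ _ hab) cI cc. Qed.

Ltac lsolveT := first [ lsolve 0 |
  match goal with H : is_true ((_ `&` _) <= _) |- _ =>
              apply: (lH H); [lsolve 0 | lsolve 0] end ].

Lemma E10 : b `&` (a `|` c a) <= a `|` (c a `&` b).
Proof. exact: M1. Qed.

Lemma E12 : c a `&` (c b `|` b) <= c b `|` (b `&` c a).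
Proof. by have := M1 _ _ hba; rewrite cc. Qed.

Lemma E7 : b `&` (a `|` c b) <= a `|` (b `&` c b).
Proof. have h := E12; rewrite -cle ?(cI, cU, cc) in h; lsolve 1. Qed.

Lemma E9 : c a `&` (a `|` c b) <= c b `|` (a `&` c a).
Proof. have h := E10; rewrite -cle ?(cI, cU, cc) in h; lsolve 1. Qed.


Lemma tle {i j} : (i < 20)%N -> (j < 20)%N -> leF i j -> t i <= t j.
Proof.
have h1 := hab; have h2 := hba; have h3 := SP2h; have h4 := E10; have h5 := E12;
have h6 := E7; have h7 := E9.
do 20 (case: i => [|i]; [do 20 (case: j => [|j]; [move=> _ _ h; first [by vm_compute in h | rewrite /=; lsolveT] |]); by [] | ]).
by [].
Qed.


Lemma tmle {i j} : (i < 20)%N -> (j < 20)%N -> ~~ leF i j -> ~~ leF j i -> t i `&` t j <= t (mt i j).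
Proof.
have h1 := hab; have h2 := hba; have h3 := SP2h; have h4 := E10; have h5 := E12;
have h6 := E7; have h7 := E9.
do 20 (case: i => [|i]; [do 20 (case: j => [|j]; [move=> _ _ hn1 hn2; first [by vm_compute in hn1 | by vm_compute in hn2 | rewrite /mt /mtab /=; lsolveT] |]); by [] | ]).
by [].
Qed.


Definition iota20 := iota 0 20.

Lemma C1b : all (fun i => all (fun j =>
   [&& leF (mt i j) i, leF (mt i j) j, (mt i j < 20)%N,
       leF i j ==> (mt i j == i) & leF j i ==> (mt i j == j)]) iota20) iota20.
Proof. by vm_compute. Qed.

Lemma Db : all (fun i => all (fun j => all (fun k =>
   mt i (jt j k) == jt (mt i j) (mt i k)) iota20) iota20) iota20.
Proof. by vm_compute. Qed.

Lemma in20 {i} : (i < 20)%N -> i \in iota20.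
Proof. by rewrite /iota20 mem_iota. Qed.

Lemma C1 {i j} : (i < 20)%N -> (j < 20)%N ->
   [&& leF (mt i j) i, leF (mt i j) j, (mt i j < 20)%N,
       leF i j ==> (mt i j == i) & leF j i ==> (mt i j == j)].
Proof.
move=> hi hj; move/allP: C1b => /(_ i (in20 hi)) /allP /(_ j (in20 hj)); exact.
Qed.

Lemma tm {i j} : (i < 20)%N -> (j < 20)%N -> t i `&` t j = t (mt i j).
Proof.
move=> hi hj; have /and5P [l1 l2 l3 l4 l5] := C1 hi hj.
apply: le_anti; apply/andP; split; last by rewrite lexI !tle.
case hij : (leF i j); first by move: l4; rewrite hij => /eqP ->; exact: leIl.
case hji : (leF j i); first by move: l5; rewrite hji => /eqP ->; exact: leIr.
by apply: tmle; rewrite ?hij ?hji.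
Qed.

Lemma mt20 {i j} : (i < 20)%N -> (j < 20)%N -> (mt i j < 20)%N.
Proof. by move=> hi hj; have /and5P [] := C1 hi hj. Qed.

Lemma tj {i j} : (i < 20)%N -> (j < 20)%N -> t i `|` t j = t (jt i j).
Proof.
move=> hi hj.
have hi' : (19 - i < 20)%N by rewrite ltnS leq_subr.
have hj' : (19 - j < 20)%N by rewrite ltnS leq_subr.
by rewrite -[LHS]cc cU !tc // tm // tc // mt20.
Qed.

Lemma jt20 i j : (jt i j < 20)%N.
Proof. by rewrite /jt ltnS leq_subr. Qed.

Definition Kab (x : T) : Prop := exists2 i, (i < 20)%N & x = t i.

Lemma Kab_ks : kleene_sublattice c Kab.
Proof.
split; first by exists 0.
split; first by exists 19.
split; first by move=> _ _ [i hi ->] [j hj ->]; exists (mt i j); rewrite ?mt20 ?tm.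
split; first by move=> _ _ [i hi ->] [j hj ->]; exists (jt i j); rewrite ?jt20 ?tj.
split; first by move=> _ [i hi ->]; exists (19 - i); rewrite ?tc // ltnS leq_subr.
move=> _ _ _ [i hi ->] [j hj ->] [k hk ->].
rewrite tj // tm ?jt20 // tm // tm // tj ?mt20 //.
move/allP: Db => /(_ i (in20 hi)) /allP /(_ j (in20 hj)) /allP /(_ k (in20 hk)) /eqP ->.
by [].
Qed.

Lemma Kab_a : Kab a. Proof. by exists 5. Qed.
Lemma Kab_b : Kab b. Proof. by exists 13. Qed.

End S.

Section Main.
Variables (d : Order.disp_t) (T : tbLatticeType d) (c : T -> T).

Lemma ks_ext {K K' : T -> Prop} : kleene_sublattice c K ->
  (forall x, K x <-> K' x) -> kleene_sublattice c K'.
Proof.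
move=> [h0 [h1 [hm [hj [hc hd]]]]] e.
split; first by apply/e.
split; first by apply/e.
split; first by move=> x y /e hx /e hy; apply/e; apply: hm.
split; first by move=> x y /e hx /e hy; apply/e; apply: hj.
split; first by move=> x /e hx; apply/e; apply: hc.
by move=> x y z /e hx /e hy /e hz; apply: hd.
Qed.

Lemma extend (K0 : T -> Prop) : kleene_sublattice c K0 ->
  exists K, kleene_block c K /\ (forall x, K0 x -> K x).
Proof.
move=> ks0.
pose P := fun A : set T => kleene_sublattice c (fun x => K0 x \/ A x).
have [A [PA Amax]] : exists A, P A /\ forall B, proper A B -> ~ P B.
  apply: Zorn_bigcup => F FP Ftot.
  rewrite /P.
  case: (pselect (exists X, F X)) => [[X0 FX0]|nF]; last first.
    eapply ks_ext; [exact: ks0|] => x; split; first by left.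
    by case=> // -[X FX _]; exfalso; apply: nF; exists X.
  have inU : forall x, K0 x \/ (bigcup F id) x -> exists2 X, F X & (K0 x \/ X x).
    move=> x [h|[X FX Xx]]; [exists X0 | exists X] => //; [by left | by right].
  have up2 : forall X1 X2, F X1 -> F X2 ->
      exists2 X, F X & (forall x, X1 x -> X x) /\ (forall x, X2 x -> X x).
    move=> X1 X2 F1 F2; case: (Ftot _ _ F1 F2) => h.
      by exists X2 => //; split => // x /h.
    by exists X1 => //; split => // x /h.
  have get3 : forall x y z, K0 x \/ (bigcup F id) x ->
      K0 y \/ (bigcup F id) y -> K0 z \/ (bigcup F id) z ->
      exists2 X, F X & [/\ K0 x \/ X x, K0 y \/ X y & K0 z \/ X z].
    move=> x y z /inU [X1 F1 h1] /inU [X2 F2 h2] /inU [X3 F3 h3].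
    have [X12 F12 [s1 s2]] := up2 _ _ F1 F2.
    have [X FXX [s12 s3]] := up2 _ _ F12 F3.
    exists X => //; split.
    - by case: h1 => [h|/s1/s12 h]; [left|right].
    - by case: h2 => [h|/s2/s12 h]; [left|right].
    - by case: h3 => [h|/s3 h]; [left|right].
  have lift : forall X x, F X -> K0 x \/ X x -> K0 x \/ (bigcup F id) x.
    by move=> X x FX [h|h]; [left|right; exists X].
  split; first by left; case: ks0.
  split; first by left; case: ks0 => _ [].
  split.
    move=> x y hx hy; have [X FX [hx' hy' _]] := get3 _ _ _ hx hy hx.
    have [_ [_ [hm _]]] := FP X FX; exact: lift FX (hm _ _ hx' hy').
  split.
    move=> x y hx hy; have [X FX [hx' hy' _]] := get3 _ _ _ hx hy hx.
    have [_ [_ [_ [hj _]]]] := FP X FX; exact: lift FX (hj _ _ hx' hy').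
  split.
    move=> x hx; have [X FX [hx' _ _]] := get3 _ _ _ hx hx hx.
    have [_ [_ [_ [_ [hc _]]]]] := FP X FX; exact: lift FX (hc _ hx').
  move=> x y z hx hy hz; have [X FX [hx' hy' hz']] := get3 _ _ _ hx hy hz.
  have [_ [_ [_ [_ [_ hd]]]]] := FP X FX; exact: hd.
exists (fun x => K0 x \/ A x); split; last by move=> x h; left.
split; first exact: PA.
move=> K' ks' sub x K'x.
case: (pselect (K0 x \/ A x)) => // nK; exfalso.
apply: (Amax K').
  split; first by move=> y Ay; apply: sub; right.
  by move=> h; apply: nK; right; apply: h.
rewrite /P; eapply ks_ext; [exact: ks'|] => y; split; first by right.
by case=> // /(fun h => sub y (or_introl h)).
Qed.

End Main.

Theorem theorem3p13 (d : Order.disp_t) (T : tbLatticeType d) (c : T -> T) :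
  pseudo_kleene c -> (sp_orthomodular c <-> pasting_of_kleene_blocks c).
Proof.
move=> [canti cc _]; split.
- move=> [sp1 sp2] x y; split; last by case=> K [].
  move=> hxy.
  have ks := @Kab_ks _ _ _ canti cc sp1 sp2 _ _ hxy.
  have [K [bK sub]] := @extend _ _ _ _ ks.
  exists K; split => //; apply: sub; [exact: Kab_a | exact: Kab_b].
- move=> past; split.
  + move=> x y hxy H.
    have [K [[ks _] Kx Ky _]] := (past x y).1 hxy.
    have [_ [_ [Km [Kj [Kc Kd]]]]] := ks.
    rewrite (Kd _ _ _ Ky Kx (Kc _ Kx)).
    rewrite [y `&` x]meetC (meet_l hxy) [y `&` c x]meetC H joinA.
    congr (_ `|` _); apply: le_anti; rewrite leUx lexx leUl leIl. done.
  + move=> x y hxy.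
    have [K [[ks _] Kx Ky _]] := (past x y).1 hxy.
    have [_ [_ [Km [Kj [Kc Kd]]]]] := ks.
    have hyx : c y <= c x by apply: canti.
    rewrite (@cI _ _ c canti cc) cc (Kd _ _ _ (Km _ _ (Kc _ Kx) Ky) Kx (Kc _ Ky)).
    congr (_ `|` _); apply: le_anti; apply/andP; split; lsolve 0.
Qed.
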